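(* Let $\Omega$ be a finite set, let $\mathcal K$ be a finite nonempty set of gambles on $\Omega$, and let $\underline{P}_{\mathcal K}$ be a coherent lower prevision on $\mathcal K$. Let $\mathcal M=\{P: P(f)\ge\underline{P}_{\mathcal K}(f)\ \forall f\in\mathcal K\}$ be its credal set and $\underline{E}(h)=\min_{P\in\mathcal M}P(h)$ its natural extension. For $f\in\mathcal K$ let $\mathcal M_f=\{P\in\mathcal M: P(f)=\underline{E}(f)\}$ and let $\mathcal E_f$ be the set of extreme points of $\mathcal M_f$. Let $\underline{P}$ be any coherent lower prevision on the set of all gambles with $\underline{P}(f)=\underline{P}_{\mathcal K}(f)$ for all $f\in\mathcal K$ (an extension of $\underline{P}_{\mathcal K}$), and let $h$ be any gamble. Then: (i) $\underline{P}(h)\le\max_{P\in\mathcal M_f}P(h)$ for every $f\in\mathcal K$; (ii) $\underline{P}(h)\le\min_{f\in\mathcal K}\max_{P\in\mathcal M_f}P(h)$, and this inequality is tight: for every gamble $h$ there exists an extension $\underline{P}'$ of $\underline{P}_{\mathcal K}$ (a coherent lower prevision on all gambles agreeing with $\underline{P}_{\mathcal K}$ on $\mathcal K$) with $\underline{P}'(h)=\min_{f\in\mathcal K}\max_{P\in\mathcal M_f}P(h)$; (iii) $\underline{P}(h)\le\min_{f\in\mathcal K}\max_{E\in\mathcal E_f}E(h)$, and this inequality is also tight in the same sense.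
   Context: Gambles are real-valued functions on the finite set $\Omega$. A linear prevision is the expectation functional $P(f)=\sum_{x}p(x)f(x)$ of a probability mass vector $p$. A lower prevision $\underline{P}$ on a set of gambles $\mathcal H$ is coherent if there is a nonempty closed convex set $\mathcal C$ of linear previsions with $\underline{P}(f)=\min_{P\in\mathcal C}P(f)$ for all $f\in\mathcal H$. Since $\mathcal K$ is finite, $\mathcal M$ is a convex polytope and each $\mathcal M_f$ is a face of it with finitely many extreme points. *)

(* Defs.v *)
From HB Require Import structures.
From mathcomp Require Import all_boot all_order all_algebra.
From mathcomp Require Import all_classical all_reals all_analysis.
Set Implicit Arguments. Unset Strict Implicit. Unset Printing Implicit Defensive.
Import Order.TTheory GRing.Theory Num.Theory.
Import numFieldNormedType.Exports.
Local Open Scope classical_set_scope.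
Local Open Scope ring_scope.

Section Defs.
Variables (R : realType) (T : finType).

(* gambles are functions T -> R; a linear prevision is given by a pmf *)
Definition pmf (p : T -> R) : Prop :=
  (forall x, 0 <= p x) /\ \sum_(x : T) p x = 1.

Definition expect (p f : T -> R) : R := \sum_(x : T) p x * f x.

Definition convex_set (C : set (T -> R)) : Prop :=
  forall p q (t : R), C p -> C q -> 0 <= t <= 1 ->
    C (fun x => t * p x + (1 - t) * q x).

(* coherence on H: lp is the lower envelope (a min) over a nonempty closed
   convex set of linear previsions; closedness w.r.t. the pointwise
   (= Euclidean, T finite) topology *)
Definition coherent_on (H : set (T -> R)) (lp : (T -> R) -> R) : Prop :=
  exists C : set (T -> R),
    [/\ C !=set0, (forall p, C p -> pmf p), convex_set C,
        @closed {ptws T -> R} C &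
        forall f, H f ->
          (exists2 p, C p & expect p f = lp f) /\
          (forall p, C p -> lp f <= expect p f)].

Definition extension (K : set (T -> R)) (lpK lp : (T -> R) -> R) : Prop :=
  coherent_on setT lp /\ (forall f, K f -> lp f = lpK f).

Definition credal (K : set (T -> R)) (lpK : (T -> R) -> R) : set (T -> R) :=
  [set p | pmf p /\ forall f, K f -> lpK f <= expect p f].

Definition natext K lpK (h : T -> R) : R :=
  inf [set expect p h | p in credal K lpK].

Definition credal_face K lpK (f : T -> R) : set (T -> R) :=
  [set p | credal K lpK p /\ expect p f = natext K lpK f].

Definition extreme_point (S : set (T -> R)) (p : T -> R) : Prop :=
  S p /\ forall q r (t : R), S q -> S r -> 0 < t < 1 ->
    p = (fun x => t * q x + (1 - t) * r x) -> q = p /\ r = p.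

Definition face_extremes K lpK f : set (T -> R) :=
  [set p | extreme_point (credal_face K lpK f) p].

Definition maxover (S : set (T -> R)) (h : T -> R) : R :=
  sup [set expect p h | p in S].

Definition minmax_face K lpK (h : T -> R) : R :=
  inf [set maxover (credal_face K lpK f) h | f in K].

Definition minmax_extreme K lpK (h : T -> R) : R :=
  inf [set maxover (face_extremes K lpK f) h | f in K].

End Defs.

(* Main.v *)
Require Import Defs.
From HB Require Import structures.
From mathcomp Require Import all_boot all_order all_algebra.
From mathcomp Require Import all_classical all_reals all_analysis.
From mathcomp Require Import lra.
Import Order.TTheory GRing.Theory Num.Theory.
Import numFieldNormedType.Exports.
Local Open Scope classical_set_scope.
Local Open Scope ring_scope.

Section Aux.
Variables (R : realType) (T : finType).
Local Notation PT := {ptws T -> R}.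

Lemma expect_cont (g : T -> R) :
  continuous (fun p : PT => expect p g).
Proof.
rewrite /expect.
apply: (@continuous_big R T +%R 0 xpredT).
  exact: add_continuous.
move=> x _ p.
apply: (@cvgMr_tmp R PT (nbhs p) _ (fun q : PT => q x)).
exact: (@proj_continuous T (fun _ => R) x).
Qed.

Lemma proj_cont (x : T) : continuous (fun p : PT => p x).
Proof. exact: (@proj_continuous T (fun _ => R) x). Qed.

Lemma closed_expect_ge (g : T -> R) c :
  closed ([set p | c <= expect p g] : set PT).
Proof.
have := @preimage_closed PT R (fun p : PT => expect p g) [set x | c <= x].
apply; last exact: closed_ge.
by move=> p _; apply: expect_cont.
Qed.

Lemma closed_expect_eq (g : T -> R) c :
  closed ([set p | expect p g = c] : set PT).
Proof.
have := @preimage_closed PT R (fun p : PT => expect p g) [set x | x = c].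
apply; last exact: closed_eq.
by move=> p _; apply: expect_cont.
Qed.

Lemma closed_pmf : closed (@Defs.pmf R T : set PT).
Proof.
have -> : (@Defs.pmf R T : set PT) =
  (\bigcap_(x in [set: T]) [set p : PT | 0 <= p x]) `&`
  [set p : PT | \sum_(x : T) p x = 1].
  apply/seteqP; split => p /=.
    by case=> h1 h2; split => // x _; apply: h1.
  by case=> h1 h2; split => // x; apply: h1.
apply: closedI.
  apply: closed_bigI => x _.
  have := @preimage_closed PT R (fun p : PT => p x) [set y | 0 <= y].
  apply; last exact: closed_ge.
  by move=> p _; apply: proj_cont.
have := @preimage_closed PT R (fun p : PT => \sum_(x : T) p x) [set y | y = 1].
apply; last exact: closed_eq.
move=> p _; apply: (@continuous_big R T +%R 0 xpredT) => //.
  exact: add_continuous.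
by move=> x _; apply: proj_cont.
Qed.

Lemma compact_pmf_sub (S : set PT) : closed S -> S `<=` Defs.pmf (T:=T) -> compact S.
Proof.
move=> cS Sp.
have := @subclosed_compact PT S [set f : PT | forall x, [set` `[0, 1%R]] (f x)] cS.
apply.
  have := @tychonoff T (fun _ => R) (fun _ => [set` `[0, 1%R]]) (fun _ => @segment_compact R 0 1).
  move=> H; exact H.
move=> p /Sp [h0 h1] x /=; rewrite in_itv /= h0 /=.
rewrite -h1 (bigD1 x) //= lerDl; apply: sumr_ge0 => y _; exact: h0.
Qed.


Lemma compact_max (S : set PT) (g : T -> R) : compact S -> S !=set0 ->
  exists2 p, S p & forall q, S q -> expect q g <= expect p g.
Proof.
move=> cS [p0 Sp0].
set A := [set expect p g | p in S].
have cA : compact A.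
  apply: continuous_compact => //.
  apply: continuous_subspaceT; exact: expect_cont.
have A0 : A !=set0 by exists (expect p0 g), p0.
have hs := compact_has_sup A0 cA.
have clA := closure_sup A0 hs.2.
have : A (sup A) by apply: (compact_closed (@Rhausdorff R) cA).
case=> p Sp pE; exists p => // q Sq; rewrite pE.
by apply: sup_upper_bound => //; exists q.
Qed.

Definition mix (t : R) (q r : T -> R) := fun x => t * q x + (1 - t) * r x.

Lemma expect_mix t q r g :
  expect (mix t q r) g = t * expect q g + (1 - t) * expect r g.
Proof.
rewrite /expect /mix !mulr_sumr -big_split /=; apply: eq_bigr => x _.
by rewrite mulrDl !mulrA.
Qed.

Lemma arith_face (t a b M : R) : 0 < t < 1 -> a <= M -> b <= M ->
  M <= t * a + (1 - t) * b -> a = M /\ b = M.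
Proof.
move=> /andP[t0 t1] aM bM H.
have ha : a = M by apply/eqP; rewrite eq_le aM /=; nra.
by split => //; apply/eqP; rewrite eq_le bM /=; nra.
Qed.

Lemma lex_lemma (gs : seq (T -> R)) : forall S : set PT, compact S -> S !=set0 ->
  exists2 p, S p & forall q r t, S q -> S r -> 0 < t < 1 -> p = mix t q r ->
    forall g, g \in gs -> expect q g = expect p g /\ expect r g = expect p g.
Proof.
elim: gs => [|g gs IH] S cS S0.
  by case: S0 => p Sp; exists p.
have [p0 Sp0 p0max] := @compact_max S g cS S0.
set S' := S `&` [set q : PT | expect p0 g <= expect q g].
have cS' : compact S' by apply: compact_closedI => //; apply: closed_expect_ge.
have S'0 : S' !=set0 by exists p0; split => //=.
have [p [Sp pge] Hp] := IH S' cS' S'0.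
have pe : expect p g = expect p0 g by apply/eqP; rewrite eq_le pge p0max.
exists p => // q r t Sq Sr t01 pE.
have [qe re] : expect q g = expect p0 g /\ expect r g = expect p0 g.
  apply: arith_face t01 (p0max _ Sq) (p0max _ Sr) _.
  by rewrite -expect_mix -pE pe.
have S'q : S' q by split => //=; rewrite qe.
have S'r : S' r by split => //=; rewrite re.
move=> g'; rewrite inE => /orP[/eqP ->|g'gs].
  by rewrite qe re pe.
exact: (Hp q r t S'q S'r t01 pE).
Qed.

Definition delta (x : T) : T -> R := fun y => (y == x)%:R.

Lemma expect_delta p x : expect p (delta x) = p x.
Proof.
rewrite /expect (bigD1 x) //= /delta eqxx mulr1 big1 ?addr0 // => y /negbTE ->.
by rewrite mulr0.
Qed.

Lemma extreme_max (S : set PT) (h : T -> R) : compact S -> S !=set0 ->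
  exists p, [/\ extreme_point S p & forall q, S q -> expect q h <= expect p h].
Proof.
move=> cS S0.
have [p0 Sp0 p0max] := @compact_max S h cS S0.
set S' := S `&` [set q : PT | expect p0 h <= expect q h].
have cS' : compact S' by apply: compact_closedI => //; apply: closed_expect_ge.
have S'0 : S' !=set0 by exists p0; split => //=.
have [p [Sp pge] Hp] := @lex_lemma [seq delta x | x <- enum T] S' cS' S'0.
have pe : expect p h = expect p0 h by apply/eqP; rewrite eq_le pge p0max.
exists p; split; last by move=> q Sq; rewrite pe; apply: p0max.
split => // q r t Sq Sr t01 pE0.
have pE : p = mix t q r by [].
have [qe re] : expect q h = expect p0 h /\ expect r h = expect p0 h.
  apply: arith_face t01 (p0max _ Sq) (p0max _ Sr) _.
  by rewrite -expect_mix -pE pe.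
have S'q : S' q by split => //=; rewrite qe.
have S'r : S' r by split => //=; rewrite re.
have H := Hp q r t S'q S'r t01 pE.
split; apply: funext => x.
  have /H [+ _] : delta x \in [seq delta x | x <- enum T] by apply: map_f; rewrite mem_enum.
  by rewrite !expect_delta.
have /H [_ +] : delta x \in [seq delta x | x <- enum T] by apply: map_f; rewrite mem_enum.
by rewrite !expect_delta.
Qed.


Lemma sup_max (S : set R) x : S x -> (forall y, S y -> y <= x) -> sup S = x.
Proof.
move=> Sx ub; apply/eqP; rewrite eq_le; apply/andP; split.
  by apply: ge_sup; [exists x | move=> y /ub].
by apply: ub_le_sup => //; exists x => y /ub.
Qed.

Lemma inf_min (S : set R) x : S x -> (forall y, S y -> x <= y) -> inf S = x.
Proof.
move=> Sx lb; apply/eqP; rewrite eq_le; apply/andP; split.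
  by apply: ge_inf => //; exists x => y /lb.
by apply: lb_le_inf; [exists x | move=> y /lb].
Qed.

Lemma finite_min (A : set R) : finite_set A -> A !=set0 ->
  exists2 x, A x & forall y, A y -> x <= y.
Proof.
move=> /finite_seqP[s ->]; elim: s => [|a s IH] [z].
  by rewrite /= in_nil.
move=> _; case: s IH => [|b s] IH.
  by exists a => [|y]; rewrite /= ?mem_seq1 ?inE // => /eqP ->.
have [|m ms mmin] := IH.
  by exists b; rewrite /= inE eqxx.
have [am|ma] := leP a m.
  exists a; first by rewrite /= inE eqxx.
  move=> y; rewrite /= inE => /orP[/eqP ->//|ys].
  exact: le_trans am (mmin _ ys).
exists m; first by rewrite /= inE ms orbT.
move=> y; rewrite /= inE => /orP[/eqP ->|ys]; [exact: ltW | exact: mmin].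
Qed.

End Aux.

Theorem corollary5 (R : realType) (T : finType)
    (K : set (T -> R)) (lpK : (T -> R) -> R) :
  finite_set K -> K !=set0 -> coherent_on K lpK ->
  (forall (lp : (T -> R) -> R), extension K lpK lp -> forall h : T -> R,
     [/\ (forall f, K f -> lp h <= maxover (credal_face K lpK f) h),
         lp h <= minmax_face K lpK h &
         lp h <= minmax_extreme K lpK h])
  /\ (forall h : T -> R, exists lp' : (T -> R) -> R,
        extension K lpK lp' /\ lp' h = minmax_face K lpK h)
  /\ (forall h : T -> R, exists lp' : (T -> R) -> R,
        extension K lpK lp' /\ lp' h = minmax_extreme K lpK h).
Proof.
move=> finK [f0 Kf0] [C [C0 Cp Cconv Ccl CK]].
have credC : forall p, C p -> credal K lpK p.
  by move=> p Cp'; split; [exact: Cp | move=> g Kg; exact: (CK g Kg).2].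
have natE : forall f, K f -> natext K lpK f = lpK f.
  move=> f Kf; have [[p Cp' pe] _] := CK f Kf.
  rewrite /natext; apply: inf_min; first by exists p => //; exact: credC.
  by move=> y [q [_ qK] <-]; exact: qK.
have faceS : forall f, K f -> compact (credal_face K lpK f : set {ptws T -> R}) /\
    credal_face K lpK f !=set0.
  move=> f Kf; split.
    apply: compact_pmf_sub; last by move=> p [[]].
    have -> : (credal_face K lpK f : set {ptws T -> R}) =
      (Defs.pmf (T:=T) : set {ptws T -> R}) `&`
      (\bigcap_(g in K) [set p : {ptws T -> R} | lpK g <= expect p g]) `&`
      [set p : {ptws T -> R} | expect p f = natext K lpK f].
      apply/seteqP; split => p /=.
        by case=> [[pp pK] pe]; split => //; split => // g Kg; exact: pK.
      by case=> [[pp pK] pe]; split => //; split => // g Kg; exact: pK.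
    apply: closedI; last exact: closed_expect_eq.
    apply: closedI; first exact: closed_pmf.
    by apply: closed_bigI => g _; exact: closed_expect_ge.
  have [[p Cp' pe] _] := CK f Kf.
  by exists p; split; [exact: credC | rewrite natE].
have key : forall h f, K f -> exists p, extreme_point (credal_face K lpK f) p /\
    forall q, credal_face K lpK f q -> expect q h <= expect p h.
  move=> h f Kf; have [cF F0] := faceS f Kf.
  by have [p [? ?]] := @extreme_max R T _ h cF F0; exists p.
have maxover_ge : forall h f q, K f -> credal_face K lpK f q ->
    expect q h <= maxover (credal_face K lpK f) h.
  move=> h f q Kf Fq; have [p [[Fp _] pmax]] := key h f Kf.
  rewrite /maxover (@sup_max _ _ (expect p h)); first exact: pmax.
    by exists p.
  by move=> y [r Fr <-]; exact: pmax.
have maxover_ext : forall h f, K f ->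
    maxover (face_extremes K lpK f) h = maxover (credal_face K lpK f) h.
  move=> h f Kf; have [p [ext pmax]] := key h f Kf.
  have Fp := ext.1.
  have e1 : maxover (face_extremes K lpK f) h = expect p h.
    apply: sup_max; first by exists p.
    by move=> y [r [Fr _] <-]; exact: pmax.
  have e2 : maxover (credal_face K lpK f) h = expect p h.
    apply: sup_max; first by exists p.
    by move=> y [r Fr <-]; exact: pmax.
  by rewrite e1 e2.
have mmE : forall h, minmax_extreme K lpK h = minmax_face K lpK h.
  move=> h; rewrite /minmax_extreme /minmax_face; congr inf.
  by apply: eq_imagel => f Kf; exact: maxover_ext.
have tight : forall h : T -> R, exists lp' : (T -> R) -> R,
        extension K lpK lp' /\ lp' h = minmax_face K lpK h.
  move=> h.
  have : forall f, exists p, K f -> extreme_point (credal_face K lpK f) p /\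
      forall q, credal_face K lpK f q -> expect q h <= expect p h.
    move=> f; case: (pselect (K f)) => Kf.
      by have [p Hp] := key h f Kf; exists p.
    by exists (fun _ => 0).
  case/choice => pf Hpf.
  have pfM : forall f, K f -> credal_face K lpK f (pf f).
    by move=> f Kf; have [[] ] := Hpf f Kf.
  pose lp' := fun g => inf [set expect (pf f) g | f in K].
  have lp'min : forall g, exists2 f, K f & lp' g = expect (pf f) g /\
      forall f', K f' -> expect (pf f) g <= expect (pf f') g.
    move=> g.
    have [_ [f Kf <-] fmin] := @finite_min R [set expect (pf f) g | f in K]
      (finite_image _ finK) (ex_intro _ _ (ex_intro2 _ _ f0 Kf0 erefl)).
    exists f => //; split; last by move=> f' Kf'; apply: fmin; exists f'.
    by rewrite /lp'; apply: inf_min; [exists f | move=> y /fmin].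
  exists lp'; split; last first.
    rewrite /lp' /minmax_face; congr inf; apply: eq_imagel => f Kf.
    rewrite /maxover (@sup_max _ _ (expect (pf f) h)) //.
      by exists (pf f) => //; exact: pfM.
    by move=> y [r Fr <-]; exact: (Hpf f Kf).2.
  split; last first.
    move=> f Kf; rewrite /lp'; apply: inf_min.
      by exists f => //; have [_ ->] := pfM f Kf; exact: natE.
    by move=> y [f' Kf' <-]; have [[_ +] _] := pfM f' Kf'; apply.
  exists [set p | Defs.pmf p /\ forall g, lp' g <= expect p g]; split.
  - exists (pf f0); have [[pp _] _] := pfM f0 Kf0; split => // g.
    by have [f Kf [-> fmin]] := lp'min g; exact: fmin.
  - by move=> p [].
  - move=> p q t [[p0 p1] pg] [[q0 q1] qg] /andP[t0 t1]; split; first split.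
    + by move=> x; have := p0 x; have := q0 x; nra.
    + rewrite big_split /= -!mulr_sumr p1 q1; lra.
    + move=> g; have := pg g; have := qg g.
      rewrite (_ : (fun x => t * p x + (1 - t) * q x) = @mix R T t p q) // expect_mix.
      nra.
  - have -> : ([set p | Defs.pmf p /\ forall g, lp' g <= expect p g] : set {ptws T -> R}) =
      (Defs.pmf (T:=T) : set {ptws T -> R}) `&`
      (\bigcap_(g in [set: T -> R]) [set p : {ptws T -> R} | lp' g <= expect p g]).
      apply/seteqP; split => p /=.
        by case=> pp pK; split => // g _; exact: pK.
      by case=> pp pK; split => // g; exact: pK.
    apply: closedI; first exact: closed_pmf.
    by apply: closed_bigI => g _; exact: closed_expect_ge.
  - move=> g _; split; last by move=> p [].
    have [f Kf [-> fmin]] := lp'min g.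
    exists (pf f) => //; have [[pp _] _] := pfM f Kf; split => // g'.
    by have [f' Kf' [-> fmin']] := lp'min g'; exact: fmin'.
split; last first.
  by split => // h; have [lp' [? E]] := tight h; exists lp'; rewrite mmE.
move=> lp [[C' [C'0 C'p C'conv C'cl C'K]] lpK_eq] h.
have part_i : forall f, K f -> lp h <= maxover (credal_face K lpK f) h.
  move=> f Kf; have [[p C'p' pe] _] := C'K f I.
  have [_ lph] := C'K h I.
  apply: le_trans (lph p C'p') _; apply: maxover_ge => //.
  split; last by rewrite natE // -lpK_eq.
  split; first exact: C'p.
  by move=> g Kg; rewrite -lpK_eq //; exact: (C'K g I).2.
have part_ii : lp h <= minmax_face K lpK h.
  apply: lb_le_inf; first by exists (maxover (credal_face K lpK f0) h), f0.
  by move=> _ [f Kf <-]; exact: part_i.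
by split => //; rewrite mmE.
Qed.
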